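(* Let $f:\mathbb{R}^n\to\mathbb{R}$ be convex and $L$-smooth ($L>0$), let $h:\mathbb{R}^n\to(-\infty,+\infty]$ be proper, closed and convex with $\mathrm{dom}\, h\subset \mathrm{dom}\, f$, let $\phi=f+h$, and assume $\phi$ attains its minimum $\phi_*$. Let $w_0\in\mathrm{dom}\, h$ and let $d_0$ be the distance from $w_0$ to the set of minimizers of $\phi$. Given $\bar\varepsilon>0$, assume the stepsize $\lambda$ satisfies $1/L\le\lambda\le d_0^2/\bar\varepsilon$. Then the total number of ACG iterations performed by the Restart ACG method (described in the context) until it produces an iterate $w_k$ with $\phi(w_k)-\phi_*\le\bar\varepsilon$ is $\mathcal{O}(\sqrt{L}\,d_0/\sqrt{\bar\varepsilon})$, i.e., bounded by an absolute constant times $\sqrt{L}\,d_0/\sqrt{\bar\varepsilon}$.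
   Context: For $\varepsilon\ge0$ and convex $\phi$, $\partial_\varepsilon\phi(x)=\{s: \phi(y)\ge\phi(x)+\langle s,y-x\rangle-\varepsilon\ \forall y\}$. For a differentiable $g$, $\ell_g(u;x)=g(x)+\langle\nabla g(x),u-x\rangle$. ACG subroutine (for $\min\psi=g+h$ with $g$ $\mu$-strongly convex and $(L+\mu)$-smooth): given $x_0$, set $A_0=0$, $\tau_0=1/L$, $y_0=x_0$; for $j=0,1,\dots$: $a_j=\frac{\tau_j+\sqrt{\tau_j^2+4\tau_jA_j}}{2}$, $\tau_{j+1}=\tau_j+\mu a_j/L$, $A_{j+1}=A_j+a_j$, $\tilde x_j=\frac{A_j}{A_{j+1}}y_j+\frac{a_j}{A_{j+1}}x_j$; $\tilde y_{j+1}=\mathrm{argmin}_u\{\ell_g(u;\tilde x_j)+h(u)+\frac{L+\mu}{2}\|u-\tilde x_j\|^2\}$; $y_{j+1}\in\mathrm{Argmin}\{\psi(u):u\in\{y_j,\tilde y_{j+1}\}\}$; $x_{j+1}=\frac{(L+\mu)a_j\tilde y_{j+1}-\frac{A_ja_jL}{A_{j+1}}y_j}{A_{j+1}\mu+1}$. Also define $\tilde\gamma_j(u)=\ell_g(u;\tilde x_j)+h(u)+\frac{\mu}{2}\|u-\tilde x_j\|^2$, $\gamma_j(u)=\tilde\gamma_j(\tilde y_{j+1})+L\langle\tilde x_j-\tilde y_{j+1},u-\tilde y_{j+1}\rangle+\frac{\mu}{2}\|u-\tilde y_{j+1}\|^2$, $\Gamma_0\equiv0$, $\Gamma_{j+1}=(A_j\Gamma_j+a_j\gamma_j)/A_{j+1}$.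 Restart ACG (stepsize $\lambda>0$): set $z_0=w_0$, $B_0=0$. For $k=1,2,\dots$: (1) $b_k=\frac{\lambda+\sqrt{\lambda^2+4\lambda B_{k-1}}}{2}$, $B_k=B_{k-1}+b_k$, $\tilde z_k=\frac{B_{k-1}}{B_k}w_{k-1}+\frac{b_k}{B_k}z_{k-1}$. (2) Run ACG with $x_0=\tilde z_k$, $g=f+\frac{1}{2\lambda}\|\cdot-\tilde z_k\|^2$, $\mu=1/\lambda$, $\psi=\phi+\frac1{2\lambda}\|\cdot-\tilde z_k\|^2$; at each ACG iteration $j\ge1$ form $\hat v_j=\frac{x_0-x_j}{A_j}+\frac{x_0-x_j}{\lambda}$, $\phi_j=\Gamma_j-\frac1{2\lambda}\|\cdot-x_0\|^2$, $\varepsilon_j=\phi(y_j)-\phi_j(x_j)-\langle\hat v_j,y_j-x_j\rangle$, and stop at the first $j$ for which the triple $(\tilde w_k,u_k,\eta_k)=(y_j,\hat v_j,\varepsilon_j)$ satisfies $u_k\in\partial_{\eta_k}\phi(\tilde w_k)$ and $\|\lambda u_k+\tilde w_k-\tilde z_k\|^2+2\lambda\eta_k\le 0.9\|\tilde z_k-\tilde w_k\|^2$. (3) $z_k=z_{k-1}-b_ku_k$, $w_k\in\mathrm{Argmin}\{\phi(u):u\in\{w_{k-1},\tilde w_k\}\}$. The total iteration count is the sum over $k$ of the ACG iterations used in step (2). *)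

(* Defs.v *)
From HB Require Import structures.
From mathcomp Require Import all_boot all_order all_algebra.
From mathcomp Require Import classical_sets reals constructive_ereal.
Set Implicit Arguments. Unset Strict Implicit. Unset Printing Implicit Defensive.
Import Order.TTheory GRing.Theory Num.Theory.
Local Open Scope ring_scope.

Section Defs.
Variables (R : realType) (n : nat).
Local Notation vec := 'rV[R]_n.

Definition dot (u v : vec) : R := \sum_(i < n) u ord0 i * v ord0 i.
Definition vnorm (u : vec) : R := Num.sqrt (dot u u).

Definition rconvex (f : vec -> R) : Prop :=
  forall x y (t : R), 0 <= t -> t <= 1 ->
    f (t *: x + (1 - t) *: y) <= t * f x + (1 - t) * f y.

Definition is_gradient (f : vec -> R) (gf : vec -> vec) : Prop :=
  forall x (e : R), 0 < e -> exists d : R, 0 < d /\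
    forall y, vnorm (y - x) < d ->
      `|f y - f x - dot (gf x) (y - x)| <= e * vnorm (y - x).

Definition L_smooth (f : vec -> R) (gf : vec -> vec) (L : R) : Prop :=
  is_gradient f gf /\ forall x y, vnorm (gf x - gf y) <= L * vnorm (x - y).

Definition eproper (h : vec -> \bar R) : Prop :=
  (forall x, h x != -oo%E) /\ exists x, (h x < +oo)%E.

(* closed = lower semicontinuous *)
Definition eclosed (h : vec -> \bar R) : Prop :=
  forall x (c : R), (c%:E < h x)%E ->
    exists d : R, 0 < d /\ forall y, vnorm (y - x) < d -> (c%:E < h y)%E.

Definition econvex (h : vec -> \bar R) : Prop :=
  forall x y (t : R), 0 < t -> t < 1 ->
    (h (t *: x + (1 - t) *: y)%R <= t%:E * h x + (1 - t)%:E * h y)%E.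

Definition edom (h : vec -> \bar R) (x : vec) : Prop := (h x < +oo)%E.

Definition phi_of (f : vec -> R) (h : vec -> \bar R) (x : vec) : \bar R :=
  ((f x)%:E + h x)%E.

Definition minimizers (phi : vec -> \bar R) : set vec :=
  fun x => forall y, (phi x <= phi y)%E.
Definition dist_to (S : set vec) (x : vec) : R :=
  inf (fun r : R => exists2 y, S y & r = vnorm (x - y)).

Definition esubdiff (phi : vec -> \bar R) (x s : vec) (eps : \bar R) : Prop :=
  (0 <= eps)%E /\
  forall y, (phi x + (dot s (y - x))%:E - eps <= phi y)%E.

Definition lin (g : vec -> R) (gg : vec -> vec) (x u : vec) : R :=
  g x + dot (gg x) (u - x).

(* the sequences generated by ACG; syt (j+1) stores \tilde y_{j+1} *)
Record acg_seq := ACGSeq {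
  sA : nat -> R; sa : nat -> R; stau : nat -> R;
  sx : nat -> vec; sy : nat -> vec; sxt : nat -> vec; syt : nat -> vec }.

(* s is a run of the first J iterations (j = 0..J-1) of ACG for
   min psi = g + h, with g mu-strongly convex and (L+mu)-smooth, started at x0 *)
Definition acg_trace (g : vec -> R) (gg : vec -> vec) (h : vec -> \bar R)
    (mu L : R) (x0 : vec) (s : acg_seq) (J : nat) : Prop :=
  let psi u := ((g u)%:E + h u)%E in
  sA s 0 = 0 /\ stau s 0 = 1 / L /\ sy s 0 = x0 /\ sx s 0 = x0 /\
  forall j, (j < J)%N ->
    [/\ [/\ sa s j = (stau s j + Num.sqrt (stau s j ^+ 2 + 4 * stau s j * sA s j)) / 2,
        stau s j.+1 = stau s j + mu * sa s j / L &
        sA s j.+1 = sA s j + sa s j],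
        sxt s j = (sA s j / sA s j.+1) *: sy s j + (sa s j / sA s j.+1) *: sx s j,
        (forall u,
          ((lin g gg (sxt s j) (syt s j.+1))%:E + h (syt s j.+1)
             + ((L + mu) / 2 * vnorm (syt s j.+1 - sxt s j) ^+ 2)%:E
           <= (lin g gg (sxt s j) u)%:E + h u
             + ((L + mu) / 2 * vnorm (u - sxt s j) ^+ 2)%:E)%E),
        (sy s j.+1 = sy s j \/ sy s j.+1 = syt s j.+1)
          /\ (psi (sy s j.+1) <= psi (sy s j))%E
          /\ (psi (sy s j.+1) <= psi (syt s j.+1))%E &
        sx s j.+1 = (1 / (sA s j.+1 * mu + 1)) *:
           (((L + mu) * sa s j) *: syt s j.+1
              - (sA s j * sa s j * L / sA s j.+1) *: sy s j)].

Definition gamt (g : vec -> R) (gg : vec -> vec) (h : vec -> \bar R) (mu : R)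
    (s : acg_seq) (j : nat) (u : vec) : \bar R :=
  ((lin g gg (sxt s j) u)%:E + h u + (mu / 2 * vnorm (u - sxt s j) ^+ 2)%:E)%E.

Definition gam (g : vec -> R) (gg : vec -> vec) (h : vec -> \bar R) (mu L : R)
    (s : acg_seq) (j : nat) (u : vec) : \bar R :=
  (gamt g gg h mu s j (syt s j.+1)
   + (L * dot (sxt s j - syt s j.+1) (u - syt s j.+1)
      + mu / 2 * vnorm (u - syt s j.+1) ^+ 2)%:E)%E.

Fixpoint Gam (g : vec -> R) (gg : vec -> vec) (h : vec -> \bar R) (mu L : R)
    (s : acg_seq) (j : nat) (u : vec) : \bar R :=
  match j with
  | 0 => 0%E
  | j'.+1 => (((sA s j')%:E * Gam g gg h mu L s j' u
               + (sa s j')%:E * gam g gg h mu L s j' u) * (1 / sA s j)%:E)%E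
  end.

(* Restart ACG, step (2): the ACG instance of stage k with prox center zt *)
Definition stage_g (f : vec -> R) (lam : R) (zt : vec) (u : vec) : R :=
  f u + 1 / (2 * lam) * vnorm (u - zt) ^+ 2.
Definition stage_gg (gf : vec -> vec) (lam : R) (zt : vec) (u : vec) : vec :=
  gf u + (1 / lam) *: (u - zt).

Definition vhat (lam : R) (zt : vec) (s : acg_seq) (j : nat) : vec :=
  (1 / sA s j) *: (zt - sx s j) + (1 / lam) *: (zt - sx s j).

Definition eps_j (f : vec -> R) (gf : vec -> vec) (h : vec -> \bar R) (L lam : R)
    (zt : vec) (s : acg_seq) (j : nat) : \bar R :=
  let phij u := (Gam (stage_g f lam zt) (stage_gg gf lam zt) h (1 / lam) L s j u
                 - (1 / (2 * lam) * vnorm (u - zt) ^+ 2)%:E)%E in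
  (phi_of f h (sy s j) - phij (sx s j) - (dot (vhat lam zt s j) (sy s j - sx s j))%:E)%E.

Definition restart_crit (f : vec -> R) (h : vec -> \bar R) (lam : R) (zt : vec)
    (wt u : vec) (eta : \bar R) : Prop :=
  esubdiff (phi_of f h) wt u eta /\
  ((vnorm (lam *: u + wt - zt) ^+ 2)%:E + (2 * lam)%:E * eta
     <= ((9%:R / 10%:R) * vnorm (zt - wt) ^+ 2)%:E)%E.

Definition crit_at f gf h L lam zt s j : Prop :=
  restart_crit f h lam zt (sy s j) (vhat lam zt s j) (eps_j f gf h L lam zt s j).

Definition stage_done f gf h (L lam : R) (zt : vec) (s : acg_seq) (m : nat)
    (wt u : vec) (eta : \bar R) : Prop :=
  [/\ acg_trace (stage_g f lam zt) (stage_gg gf lam zt) h (1 / lam) L zt s m,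
      (1 <= m)%N, crit_at f gf h L lam zt s m,
      (forall j, (1 <= j)%N -> (j < m)%N -> ~ crit_at f gf h L lam zt s j) &
      [/\ wt = sy s m, u = vhat lam zt s m & eta = eps_j f gf h L lam zt s m]].

Definition stage_partial f gf h (L lam : R) (zt : vec) (s : acg_seq) (J : nat) : Prop :=
  acg_trace (stage_g f lam zt) (stage_gg gf lam zt) h (1 / lam) L zt s J /\
  (forall j, (1 <= j)%N -> (j < J)%N -> ~ crit_at f gf h L lam zt s j).

(* An execution prefix of Restart ACG: outer iterations k = 1..K completed
   (stage k used m k ACG iterations), and stage K+1 in progress with J ACG
   iterations performed. *)
Definition restart_prefix f gf h (L lam : R) (w0 : vec)
    (z w zt wt u : nat -> vec) (b B : nat -> R) (eta : nat -> \bar R)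
    (m : nat -> nat) (s : nat -> acg_seq) (K J : nat) : Prop :=
  [/\ [/\ z 0 = w0, w 0 = w0 & B 0 = 0],
      (forall k, (1 <= k)%N -> (k <= K.+1)%N ->
        [/\ b k = (lam + Num.sqrt (lam ^+ 2 + 4 * lam * B k.-1)) / 2,
            B k = B k.-1 + b k &
            zt k = (B k.-1 / B k) *: w k.-1 + (b k / B k) *: z k.-1]),
      (forall k, (1 <= k)%N -> (k <= K)%N ->
        [/\ stage_done f gf h L lam (zt k) (s k) (m k) (wt k) (u k) (eta k),
            z k = z k.-1 - b k *: u k &
            (w k = w k.-1 \/ w k = wt k)
              /\ (phi_of f h (w k) <= phi_of f h (w k.-1))%E
              /\ (phi_of f h (w k) <= phi_of f h (wt k))%E]) &
      stage_partial f gf h L lam (zt K.+1) (s K.+1) J].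

End Defs.

(* Main.v *)
Require Import Defs.
From HB Require Import structures.
From mathcomp Require Import all_boot all_order all_algebra.
From mathcomp Require Import classical_sets reals constructive_ereal.
From mathcomp Require Import lra ring.
Import Order.TTheory GRing.Theory Num.Theory.
Local Open Scope ring_scope.
Set Implicit Arguments. Unset Strict Implicit. Unset Printing Implicit Defensive.

Section Vec.
Variables (R : realType) (n : nat).
Local Notation vec := 'rV[R]_n.
Implicit Types (u v w p q : vec) (a c : R).

Lemma dotC u v : dot u v = dot v u.
Proof. by rewrite /dot; apply: eq_bigr => i _; rewrite mulrC. Qed.
Lemma dotDl u v w : dot (u + v) w = dot u w + dot v w.
Proof. by rewrite /dot -big_split; apply: eq_bigr => i _; rewrite mxE mulrDl. Qed.
Lemma dotZl a u v : dot (a *: u) v = a * dot u v.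
Proof. by rewrite /dot mulr_sumr; apply: eq_bigr => i _; rewrite mxE mulrA. Qed.
Lemma dotNl u v : dot (- u) v = - dot u v.
Proof. by rewrite -scaleN1r dotZl mulN1r. Qed.
Lemma dotBl u v w : dot (u - v) w = dot u w - dot v w.
Proof. by rewrite dotDl dotNl. Qed.
Lemma dotDr u v w : dot w (u + v) = dot w u + dot w v.
Proof. by rewrite dotC dotDl !(dotC w). Qed.
Lemma dotZr a u v : dot v (a *: u) = a * dot v u.
Proof. by rewrite dotC dotZl dotC. Qed.
Lemma dotNr u v : dot v (- u) = - dot v u.
Proof. by rewrite dotC dotNl dotC. Qed.
Lemma dotBr u v w : dot w (u - v) = dot w u - dot w v.
Proof. by rewrite dotDr dotNr. Qed.
Lemma dot0l u : dot 0 u = 0.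
Proof. by rewrite -(scale0r 0) dotZl mul0r. Qed.
Lemma dot0r u : dot u 0 = 0.
Proof. by rewrite dotC dot0l. Qed.
Lemma dot_ge0 u : 0 <= dot u u.
Proof. by apply: sumr_ge0 => i _; rewrite -expr2 sqr_ge0. Qed.
Lemma vnorm2 u : vnorm u ^+ 2 = dot u u.
Proof. by rewrite /vnorm sqr_sqrtr // dot_ge0. Qed.
Lemma vnorm_ge0 u : 0 <= vnorm u.
Proof. exact: sqrtr_ge0. Qed.
Lemma vnormZ a u : vnorm (a *: u) = `|a| * vnorm u.
Proof. by rewrite /vnorm dotZl dotZr mulrA -expr2 sqrtrM ?sqr_ge0 // sqrtr_sqr. Qed.

Lemma natRS k : (k.+1)%:R = k%:R + 1 :> R.
Proof. by rewrite -addn1 natrD. Qed.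

Lemma exists_nat_gt (x : R) : exists N : nat, x < N%:R.
Proof.
exists (Num.Def.archi_bound `|x|); apply: le_lt_trans (ler_norm x) _.
exact: (archi_boundP (normr_ge0 x)).
Qed.

Definition dotE := (dotDl, dotDr, dotBl, dotBr, dotZl, dotZr, dotNl, dotNr, dot0l, dot0r).

Lemma dot_sub u v : dot (u - v) (u - v) = dot u u - 2 * dot u v + dot v v.
Proof. rewrite !dotE (dotC v u); ring. Qed.
Lemma dot_add u v : dot (u + v) (u + v) = dot u u + 2 * dot u v + dot v v.
Proof. rewrite !dotE (dotC v u); ring. Qed.

Lemma three_pt u v p :
  dot (u - p) (u - p) = dot (v - p) (v - p) + 2 * dot (v - p) (u - v) + dot (u - v) (u - v).
Proof.
have -> : u - p = (v - p) + (u - v) by apply/rowP => i; rewrite !mxE; ring.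
by rewrite dot_add.
Qed.

Lemma par_ineq u v : dot (u + v) (u + v) <= 2 * dot u u + 2 * dot v v.
Proof.
have := dot_ge0 (u - v); rewrite dot_sub dot_add; lra.
Qed.

Lemma young u v (s : R) : 0 < s -> 2 * s * dot u v <= s ^+ 2 * dot u u + dot v v.
Proof.
move=> s0; have := dot_ge0 (s *: u - v); rewrite dot_sub !dotE; nra.
Qed.

Lemma cauchy_schwarz u v : dot u v <= vnorm u * vnorm v.
Proof.
have nu := vnorm_ge0 u; have nv := vnorm_ge0 v.
have hu := vnorm2 u; have hv := vnorm2 v.
have [uz|upos] := eqVneq (vnorm u) 0.
  rewrite uz mul0r; rewrite uz expr0n /= in hu.
  rewrite leNgt; apply/negP => dpos.
  have := young u v (s:=(dot v v + 1) / dot u v) (divr_gt0 (ltr_wpDl (dot_ge0 v) ltr01) dpos).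
  rewrite -hu mulr0 add0r -mulrA mulrC -mulrA mulVf ?gt_eqF // mulr1. nra.
have [vz|vpos] := eqVneq (vnorm v) 0.
  rewrite vz mulr0; rewrite vz expr0n /= in hv.
  rewrite leNgt dotC; apply/negP => dpos.
  have := young v u (s:=(dot u u + 1) / dot v u) (divr_gt0 (ltr_wpDl (dot_ge0 u) ltr01) dpos).
  rewrite -hv mulr0 add0r -mulrA mulrC -mulrA mulVf ?gt_eqF // mulr1. nra.
have up : 0 < vnorm u by rewrite lt_def upos.
have vp : 0 < vnorm v by rewrite lt_def vpos.
have := young u v (divr_gt0 vp up).
rewrite -hu -hv expr_div_n.
have e1 : (vnorm v ^+ 2 / vnorm u ^+ 2 * vnorm u ^+ 2) = vnorm v ^+ 2.
  by rewrite mulfVK // expf_neq0 // gt_eqF.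
rewrite e1 => H.
have : 2 * (vnorm v / vnorm u) * dot u v * vnorm u <= 2 * vnorm v ^+ 2 * vnorm u.
  by rewrite -ler_pdivlMr // mulfK ?gt_eqF //; lra.
have E : 2 * (vnorm v / vnorm u) * dot u v * vnorm u = 2 * vnorm v * dot u v.
  by field; rewrite gt_eqF.
rewrite E => H2.
have : vnorm v * (dot u v - vnorm u * vnorm v) <= 0 by nra.
rewrite pmulr_rle0 //; lra.
Qed.

End Vec.

Section Fprops.
Variables (R : realType) (n : nat).
Local Notation vec := 'rV[R]_n.
Variables (f : vec -> R) (gf : vec -> vec) (L : R).
Hypotheses (L0 : 0 < L) (fconv : rconvex f) (fsm : L_smooth f gf L).

Lemma grad_key x y e : 0 < e -> dot (gf x) (y - x) - e * vnorm (y - x) <= f y - f x.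
Proof.
set d := y - x; set D := dot (gf x) d.
have nd := vnorm_ge0 d.
move=> e0.
  have [del [del0 Hdel]] := (proj1 fsm) x e e0.
  set t := Num.min (1/2) (del / (2 * (vnorm d + 1))).
  have t0 : 0 < t by rewrite lt_min; apply/andP; split; [lra|apply: divr_gt0 => //; lra].
  have t1 : t <= 1/2 by rewrite ge_min lexx.
  have t2 : t <= del / (2 * (vnorm d + 1)) by rewrite ge_min lexx orbT.
  have t3 : t * (2 * (vnorm d + 1)) <= del by rewrite -ler_pdivlMr //; lra.
  set p := x + t *: d.
  have pd : p - x = t *: d by rewrite /p addrC addKr.
  have np : vnorm (p - x) = t * vnorm d by rewrite pd vnormZ ger0_norm //; lra.
  have tl : t * vnorm d < t * (2 * (vnorm d + 1)) by rewrite ltr_pM2l //; lra.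
  have := Hdel p; rewrite np => /(_ ltac:(lra)).
  rewrite pd dotZr -/D => Hab.
  have := fconv y x (ltW t0) ltac:(lra).
  have -> : t *: y + (1 - t) *: x = p by apply/rowP => i; rewrite /p /d !mxE; ring.
  move=> Hc.
  have Hl := ler_normlW Hab.
  have : t * (D - e * vnorm d) <= t * (f y - f x).
    have := ler_norml (f p - f x - t * D) (e * (t * vnorm d)).
    move: Hab => /[swap] -> /andP [Ha _].
    have -> : t * (D - e * vnorm d) = t*D - e*(t*vnorm d) by ring.
    have -> : t * (f y - f x) = (t * f y + (1-t) * f x) - f x by ring.
    lra.
  by rewrite ler_pM2l.
Qed.

Lemma grad_ineq x y : f x + dot (gf x) (y - x) <= f y.
Proof.
have nd := vnorm_ge0 (y - x).
apply/ler_addgt0Pr => e e0.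
have e1 : 0 < vnorm (y - x) + 1 by lra.
have := grad_key x y (divr_gt0 e0 e1).
have : e / (vnorm (y - x) + 1) * vnorm (y - x) <= e.
  by rewrite mulrAC ler_pdivrMr //; lra.
lra.
Qed.

Lemma lipschitz_dot x y d : dot (gf x - gf y) d <= L * vnorm (x - y) * vnorm d.
Proof.
apply: le_trans (cauchy_schwarz _ _) _.
by apply: ler_wpM2r; [exact: vnorm_ge0 | exact: (proj2 fsm)].
Qed.

Lemma descent_N x y (N : nat) : (0 < N)%N ->
  f y - f x <= dot (gf x) (y - x) + L * dot (y - x) (y - x) * (N.+1)%:R / (2 * N%:R).
Proof.
move=> N0.
have Q0 := dot_ge0 (y - x).
have hQ := vnorm2 (y - x).
have Nr : 0 < N%:R :> R by rewrite ltr0n.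
pose p (k : nat) := x + (k%:R / N%:R) *: (y - x).
have ind : forall k, (k <= N)%N ->
   f (p k) - f x <= k%:R / N%:R * dot (gf x) (y - x)
       + L * dot (y - x) (y - x) * (k%:R * k.+1%:R) / (2 * N%:R ^+ 2).
  elim=> [|k IH] kN.
    have -> : p 0%N = x by rewrite /p mul0r scale0r addr0.
    rewrite !mul0r subrr; lra.
  have IH' := IH (ltnW kN).
  have kk : k.+1%:R = k%:R + 1 :> R by rewrite -addn1 natrD.
  have g := grad_ineq (p k.+1) (p k).
  have e1 : p k - p k.+1 = (- (1 / N%:R)) *: (y - x).
    by apply/rowP => i; rewrite /p !mxE kk; field; rewrite gt_eqF.
  rewrite e1 dotZr in g.
  have e2 : p k.+1 - x = (k.+1%:R / N%:R) *: (y - x) by rewrite /p addrC addKr.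
  have l := lipschitz_dot (p k.+1) x (y - x).
  rewrite e2 vnormZ ger0_norm ?divr_ge0 // in l.
  have e3 : dot (gf (p k.+1)) (y - x) = dot (gf x) (y - x) + dot (gf (p k.+1) - gf x) (y - x)
    by rewrite dotBl; ring.
  rewrite e3 in g.
  have l2 : L * (k.+1%:R / N%:R * vnorm (y - x)) * vnorm (y - x)
      = L * dot (y - x) (y - x) * k.+1%:R / N%:R.
    by rewrite -hQ; field; rewrite gt_eqF.
  rewrite l2 in l.
  have E : f (p k.+1) - f x <= (f (p k) - f x)
     + 1 / N%:R * (dot (gf x) (y - x) + L * dot (y - x) (y - x) * k.+1%:R / N%:R).
    have : 1 / N%:R * dot (gf (p k.+1) - gf x) (y - x)
        <= 1 / N%:R * (L * dot (y - x) (y - x) * k.+1%:R / N%:R).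
      by rewrite ler_pM2l ?divr_gt0.
    lra.
  apply: (le_trans E).
  have E2 : k%:R / N%:R * dot (gf x) (y - x)
       + L * dot (y - x) (y - x) * (k%:R * k.+1%:R) / (2 * N%:R ^+ 2)
       + 1 / N%:R * (dot (gf x) (y - x) + L * dot (y - x) (y - x) * k.+1%:R / N%:R)
     = k.+1%:R / N%:R * dot (gf x) (y - x)
       + L * dot (y - x) (y - x) * (k.+1%:R * k.+2%:R) / (2 * N%:R ^+ 2).
    have kk2 : k.+2%:R = k%:R + 2 :> R by rewrite -addn2 natrD.
    by rewrite kk2 kk; field; rewrite gt_eqF.
  lra.
have := ind N (leqnn N).
have -> : p N = y by rewrite /p divff ?gt_eqF // scale1r addrC subrK.
have E : N%:R / N%:R * dot (gf x) (y - x)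
       + L * dot (y - x) (y - x) * (N%:R * N.+1%:R) / (2 * N%:R ^+ 2)
     = dot (gf x) (y - x) + L * dot (y - x) (y - x) * N.+1%:R / (2 * N%:R).
  by field; rewrite gt_eqF.
lra.
Qed.

Lemma descent x y : f y <= f x + dot (gf x) (y - x) + L / 2 * dot (y - x) (y - x).
Proof.
have Q0 := dot_ge0 (y - x).
apply/ler_addgt0Pr => e e0.
have X0 : 0 <= L * dot (y - x) (y - x) / (2 * e).
  by rewrite divr_ge0 ?mulr_ge0 // ?ltW //; lra.
have [N0 hN0] := exists_nat_gt (L * dot (y - x) (y - x) / (2 * e)).
set N := N0.+1.
have hN' : L * dot (y - x) (y - x) / (2 * e) < N%:R by rewrite /N (natRS R N0); lra.
have Nr : 0 < N%:R :> R by rewrite ltr0n.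
have := descent_N x y (isT : (0 < N)%N).
have E : L * dot (y - x) (y - x) * N.+1%:R / (2 * N%:R)
   = L / 2 * dot (y - x) (y - x) + L * dot (y - x) (y - x) / (2 * N%:R).
  by rewrite (natRS R N); field; rewrite gt_eqF.
rewrite E.
have : L * dot (y - x) (y - x) / (2 * N%:R) <= e.
  rewrite ler_pdivrMr; last lra.
  move: hN'; rewrite ltr_pdivrMr; last lra.
  lra.
lra.
Qed.
End Fprops.

Lemma root_sq (R : realType) (t A0 : R) : 0 < t -> 0 <= A0 ->
  let a := (t + Num.sqrt (t ^+ 2 + 4 * t * A0)) / 2 in 0 < a /\ a ^+ 2 = t * (A0 + a).
Proof.
move=> t0 A00 a.
have r0 : 0 <= t ^+ 2 + 4 * t * A0 by nra.
have hr := sqr_sqrtr r0. have rg := sqrtr_ge0 (t ^+ 2 + 4 * t * A0).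
split; first by rewrite /a; lra.
rewrite /a. move: hr rg; set r := Num.sqrt _ => hr rg. 
rewrite -[LHS]/(((t + r) / 2) ^+ 2). nra.
Qed.

Lemma root_growth (R : realType) (t A0 a c : R) : 0 < t -> 0 < a ->
  a ^+ 2 = t * (A0 + a) -> 0 <= c -> c ^+ 2 <= t * A0 -> t / 2 + c <= a.
Proof.
move=> t0 a0 e c0 hc.
have k : (a - t / 2) * (a - t / 2) >= c ^+ 2 + t ^+ 2 / 4 by move: e; rewrite !expr2; nra.
rewrite leNgt; apply/negP => lt.
have [ge|lt2] := lerP 0 (a - t / 2).
  have : (a - t / 2) * (a - t / 2) < c * c by nra.
  nra.
have : (a - t / 2) * (a - t / 2) < t ^+ 2 / 4 by nra.
nra.
Qed.

Section Ext.
Variable R : realType.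
Lemma fin_of (x : \bar R) : x != -oo%E -> (x < +oo)%E -> x = (fine x)%:E.
Proof. by move=> a b; rewrite fineK // fin_numElt ltNye a b. Qed.
End Ext.


Section Prox.
Variables (R : realType) (n : nat).
Local Notation vec := 'rV[R]_n.

Lemma cvx_sq (t : R) (p q : vec) :
  dot (t *: p + (1 - t) *: q) (t *: p + (1 - t) *: q)
  = t * dot p p + (1 - t) * dot q q - t * (1 - t) * dot (p - q) (p - q).
Proof. rewrite !dotE (dotC q p); ring. Qed.

Definition hr (h : vec -> \bar R) (u : vec) : R := fine (h u).
Definition dom (h : vec -> \bar R) (u : vec) := (h u < +oo)%E.

Lemma hE (h : vec -> \bar R) u : eproper h -> dom h u -> h u = (hr h u)%:E.
Proof. by move=> hp d; apply: fin_of => //; case: hp => H _; exact: H. Qed.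

Lemma limit_t (X Y D : R) : 0 <= D ->
  (forall t, 0 < t -> t < 1 -> X <= Y - (1 - t) * D) -> X <= Y - D.
Proof.
move=> D0 H; apply/ler_addgt0Pr => e e0.
set t := Num.min (1/2) (e / (D + 1)).
have t0 : 0 < t by rewrite lt_min; apply/andP; split; [lra|apply: divr_gt0 => //; lra].
have t1 : t <= 1/2 by rewrite ge_min lexx.
have t2 : t <= e / (D + 1) by rewrite ge_min lexx orbT.
have t3 : t * (D + 1) <= e by rewrite -ler_pdivlMr //; lra.
have := H t t0 ltac:(lra).
have : t * D <= t * (D + 1) by rewrite ler_pM2l //; lra.
lra.
Qed.

Lemma three_point (h : vec -> \bar R) (c p z : vec) (k0 kap : R) :
  eproper h -> econvex h -> 0 <= kap -> dom h z ->
  let F v := k0 + dot p (v - c) + hr h v + kap / 2 * dot (v - c) (v - c) in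
  (forall u, dom h u -> F z <= F u) ->
  forall u, dom h u -> F z + kap / 2 * dot (u - z) (u - z) <= F u.
Proof.
move=> hp hc k0' dz F Hmin u du.
suff : F z <= F u - kap / 2 * dot (u - z) (u - z) by lra.
have D0 : 0 <= kap / 2 * dot (u - z) (u - z) by rewrite mulr_ge0 ?dot_ge0 //; lra.
apply: limit_t => // t t0 t1.
set v := t *: u + (1 - t) *: z.
have hv := hc u z t t0 t1; rewrite -/v (hE hp du) (hE hp dz) -!EFinM -EFinD in hv.
have dv : dom h v by apply: le_lt_trans hv _; exact: ltry.
rewrite (hE hp dv) lee_fin in hv.
have Fv := Hmin v dv.
have e1 : v - c = t *: (u - c) + (1 - t) *: (z - c)
  by apply/rowP => i; rewrite /v !mxE; ring.
have e2 : (u - c) - (z - c) = u - z by apply/rowP => i; rewrite !mxE; ring.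
have Fv' : F v <= t * F u + (1 - t) * F z - kap / 2 * (t * (1 - t) * dot (u - z) (u - z)).
  rewrite /F e1 cvx_sq e2 !dotE.
  have : t * (1 - t) * kap / 2 * 0 = 0 by ring.
  nra.
have : t * F z <= t * (F u - (1 - t) * (kap / 2 * dot (u - z) (u - z))).
  move: Fv Fv'; set Q := kap / 2 * dot (u - z) (u - z). 
  have -> : kap / 2 * (t * (1 - t) * dot (u - z) (u - z)) = t * (1 - t) * Q by rewrite /Q; ring.
  move=> Fv Fv'.
  have -> : t * (F u - (1 - t) * Q) = t * F u - t * (1 - t) * Q by ring.
  lra.
by rewrite ler_pM2l.
Qed.

Lemma quad_shift (al be : R) (p1 p2 E v u : vec) :
  (al + be) *: v = al *: p1 + be *: p2 - E ->
  al / 2 * dot (u - p1) (u - p1) + be / 2 * dot (u - p2) (u - p2) + dot E (u - p2)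
  = al / 2 * dot (v - p1) (v - p1) + be / 2 * dot (v - p2) (v - p2) + dot E (v - p2)
    + (al + be) / 2 * dot (u - v) (u - v).
Proof.
move=> H.
have EE : dot E (u - p2) = dot E (v - p2) + dot E (u - v).
  have -> : u - p2 = (v - p2) + (u - v) by apply/rowP => i; rewrite !mxE; ring.
  by rewrite dotDr.
rewrite EE (three_pt u v p1) (three_pt u v p2).
have Z : al * dot (v - p1) (u - v) + be * dot (v - p2) (u - v) + dot E (u - v) = 0.
  have -> : al * dot (v - p1) (u - v) + be * dot (v - p2) (u - v) + dot E (u - v)
     = dot (al *: (v - p1) + be *: (v - p2) + E) (u - v) by rewrite (dotDl (al *: _ + _)) (dotDl (al *: _)) !dotZl.
  have -> : al *: (v - p1) + be *: (v - p2) + E = (al + be) *: v - (al *: p1 + be *: p2 - E).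
    by apply/rowP => i; rewrite !mxE; ring.
  by rewrite H subrr dot0l.
lra.
Qed.

Lemma dot_lin2 (al be : R) (e u v : vec) : al * dot e u + be * dot e v = dot e (al *: u + be *: v).
Proof. by rewrite dotDr !dotZr. Qed.

Lemma dot_comb2 (al be : R) (u v : vec) :
  dot (al *: u + be *: v) (al *: u + be *: v)
  = al ^+ 2 * dot u u + 2 * al * be * dot u v + be ^+ 2 * dot v v.
Proof. rewrite !dotE (dotC v u); ring. Qed.

Lemma fin_le_dom (h : vec -> \bar R) (r c : R) (v : vec) :
  ((r%:E + h v) <= c%:E)%E -> dom h v.
Proof.
move=> H; rewrite /dom ltey; apply/negP => /eqP hinf.
by move: H; rewrite hinf addey // leye_eq.
Qed.
End Prox.

Section ACG.
Variables (R : realType) (n : nat).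
Local Notation vec := 'rV[R]_n.
Variables (g : vec -> R) (gg : vec -> vec) (h : vec -> \bar R) (mu L : R) (x0 : vec)
  (s : acg_seq R n) (J : nat).
Hypotheses (L0 : 0 < L) (mu0 : 0 <= mu)
  (hlow : forall x u, lin g gg x u + mu / 2 * dot (u - x) (u - x) <= g u)
  (hup : forall x u, g u <= lin g gg x u + (L + mu) / 2 * dot (u - x) (u - x))
  (hprop : eproper h) (hconv : econvex h)
  (tr : acg_trace g gg h mu L x0 s J).

Local Notation A := (sA s).
Local Notation a := (sa s).
Local Notation tau := (stau s).
Local Notation x := (sx s).
Local Notation y := (sy s).
Local Notation xt := (sxt s).
Local Notation yt := (syt s).


Lemma tr0 : [/\ A 0 = 0, tau 0 = 1 / L, y 0 = x0 & x 0 = x0].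
Proof. by case: tr => [? [? [? [? _]]]]. Qed.

Lemma trS j : (j < J)%N ->
    [/\ [/\ a j = (tau j + Num.sqrt (tau j ^+ 2 + 4 * tau j * A j)) / 2,
        tau j.+1 = tau j + mu * a j / L &
        A j.+1 = A j + a j],
        xt j = (A j / A j.+1) *: y j + (a j / A j.+1) *: x j,
        (forall u,
          ((lin g gg (xt j) (yt j.+1))%:E + h (yt j.+1)
             + ((L + mu) / 2 * vnorm (yt j.+1 - xt j) ^+ 2)%:E
           <= (lin g gg (xt j) u)%:E + h u
             + ((L + mu) / 2 * vnorm (u - xt j) ^+ 2)%:E)%E),
        (y j.+1 = y j \/ y j.+1 = yt j.+1)
          /\ (((g (y j.+1))%:E + h (y j.+1)) <= ((g (y j))%:E + h (y j)))%E
          /\ (((g (y j.+1))%:E + h (y j.+1)) <= ((g (yt j.+1))%:E + h (yt j.+1)))%E &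
        x j.+1 = (1 / (A j.+1 * mu + 1)) *:
           (((L + mu) * a j) *: yt j.+1
              - (A j * a j * L / A j.+1) *: y j)].
Proof. by case: tr => [_ [_ [_ [_ H]]]]; exact: H. Qed.

Lemma scal j : (j <= J)%N -> 0 <= A j /\ tau j = (1 + mu * A j) / L.
Proof.
have L0' := L0; have mu0' := mu0.
elim: j => [|j IH] jJ.
  by have [-> -> _ _] := tr0; split => //; rewrite mulr0 addr0.
have [[ha ht hA] _ _ _ _] := trS jJ.
have [A0 t0] := IH (ltnW jJ).
have tp : 0 < tau j by rewrite t0 divr_gt0 //; have := mulr_ge0 mu0 A0; lra.
have [ap _] := root_sq tp A0.
rewrite -ha in ap.
split; first by rewrite hA; lra.
by rewrite ht hA t0; field; rewrite gt_eqF.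
Qed.

Lemma scalS j : (j < J)%N ->
  [/\ 0 < a j, a j ^+ 2 = tau j * A j.+1, 0 < A j.+1, 0 < tau j & L * tau j = 1 + mu * A j].
Proof.
have L0' := L0; have mu0' := mu0.
move=> jJ.
have [[ha ht hA] _ _ _ _] := trS jJ.
have [A0 t0] := scal (ltnW jJ).
have tp : 0 < tau j by rewrite t0 divr_gt0 //; have := mulr_ge0 mu0 A0; lra.
have [ap e] := root_sq tp A0.
rewrite -ha in ap e.
split; [done | by rewrite hA | by rewrite hA; lra | done | ].
by rewrite t0; field; rewrite gt_eqF.
Qed.

Lemma A_growth j : (j <= J)%N -> (j%:R) ^+ 2 / (4 * L) <= A j.
Proof.
have L0' := L0; have mu0' := mu0.
elim: j => [|j IH] jJ.
  by have [-> _ _ _] := tr0; rewrite expr0n /= mul0r.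
have IH' := IH (ltnW jJ).
have [ap e Ap tp Lt] := scalS jJ.
have [[_ _ hA] _ _ _ _] := trS jJ.
have [A0 t0] := scal (ltnW jJ).
have c0 : 0 <= j%:R / (2 * L) by rewrite divr_ge0 ?ler0n //; lra.
have tL : 1 / L <= tau j.
  rewrite t0 ler_pM2r ?invr_gt0 //; have := mulr_ge0 mu0 A0; lra.
have hc : (j%:R / (2 * L)) ^+ 2 <= tau j * A j.
  have : (j%:R / (2 * L)) ^+ 2 = 1 / L * (j%:R ^+ 2 / (4 * L)) by field; rewrite gt_eqF.
  move=> ->; apply: ler_pM => //; first by rewrite divr_ge0 //; lra.
  by rewrite divr_ge0 ?sqr_ge0 //; lra.
have ee : a j ^+ 2 = tau j * (A j + a j) by rewrite e hA.
have ga := root_growth tp ap ee c0 hc.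
rewrite hA (natRS R j).
have : (j%:R + 1) ^+ 2 / (4 * L) = j%:R ^+ 2 / (4 * L) + (2 * j%:R + 1) / (4 * L).
  by field; rewrite gt_eqF.
move=> ->.
have : (2 * j%:R + 1) / (4 * L) <= tau j / 2 + j%:R / (2 * L).
  have : (2 * j%:R + 1) / (4 * L) = 1 / L / 2 + j%:R / (2 * L) - 1 / (4 * L) by field; rewrite gt_eqF.
  move=> ->. have : 0 <= 1 / (4 * L) by rewrite divr_ge0 //; lra.
  lra.
lra.
Qed.

Lemma u_dom : exists u0, dom h u0.
Proof. by case: hprop. Qed.

Definition psiR (u : vec) := g u + hr h u.
Definition gtR j u := lin g gg (xt j) u + hr h u + mu / 2 * dot (u - xt j) (u - xt j).
Definition gamR j u := gtR j (yt j.+1)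
  + (L * dot (xt j - yt j.+1) (u - yt j.+1) + mu / 2 * dot (u - yt j.+1) (u - yt j.+1)).
Fixpoint GR j u := match j with
  | 0 => 0
  | j'.+1 => (A j' * GR j' u + a j' * gamR j' u) * (1 / A j'.+1) end.

Lemma yt_dom j : (j < J)%N -> dom h (yt j.+1).
Proof.
move=> jJ; have [_ _ Hm _ _] := trS jJ.
have [u0 du0] := u_dom.
have := Hm u0; rewrite (hE hprop du0) -!EFinD => H.
rewrite /dom ltey; apply/negP => /eqP hinf.
by move: H; rewrite hinf addey // addye // leye_eq.
Qed.

Lemma argminR j : (j < J)%N -> forall u, dom h u ->
  lin g gg (xt j) (yt j.+1) + hr h (yt j.+1) + (L + mu) / 2 * dot (yt j.+1 - xt j) (yt j.+1 - xt j)
  <= lin g gg (xt j) u + hr h u + (L + mu) / 2 * dot (u - xt j) (u - xt j).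
Proof.
move=> jJ u du; have [_ _ Hm _ _] := trS jJ.
by have := Hm u; rewrite (hE hprop du) (hE hprop (yt_dom jJ)) -!EFinD lee_fin !vnorm2.
Qed.

Lemma gam_le_gt j : (j < J)%N -> forall u, dom h u -> gamR j u <= gtR j u.
Proof.
have L0' := L0; have mu0' := mu0.
move=> jJ u du.
have k0 : 0 <= L + mu by lra.
have := three_point (c := xt j) (p := gg (xt j)) (k0 := g (xt j)) hprop hconv k0 (yt_dom jJ).
move=> /= /(_ _ u du).
have H : forall u : vec, dom h u ->
   g (xt j) + dot (gg (xt j)) (yt j.+1 - xt j) + hr h (yt j.+1) +
   (L + mu) / 2 * dot (yt j.+1 - xt j) (yt j.+1 - xt j) <=
   g (xt j) + dot (gg (xt j)) (u - xt j) + hr h u + (L + mu) / 2 * dot (u - xt j) (u - xt j).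
  by move=> w dw; have := argminR jJ dw; rewrite /lin.
move=> /(_ H) T.
rewrite /gamR /gtR /lin.
rewrite (three_pt u (yt j.+1) (xt j)) in T *.
have -> : dot (xt j - yt j.+1) (u - yt j.+1) = - dot (yt j.+1 - xt j) (u - yt j.+1)
  by rewrite -dotNl opprB.
move: T.
set D0 := dot (yt j.+1 - xt j) (yt j.+1 - xt j).
set Y := dot (yt j.+1 - xt j) (u - yt j.+1).
set D := dot (u - yt j.+1) (u - yt j.+1).
nra.
Qed.

Lemma gt_le_psi j u : dom h u -> gtR j u <= psiR u.
Proof.
move=> du; have := hlow (xt j) u; rewrite /gtR /psiR; lra.
Qed.

Lemma psi_yt j : psiR (yt j.+1) <= gtR j (yt j.+1) + L / 2 * dot (yt j.+1 - xt j) (yt j.+1 - xt j).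
Proof.
have := hup (xt j) (yt j.+1); rewrite /gtR /psiR.
set D := dot _ _. have -> : (L + mu) / 2 * D = mu / 2 * D + L / 2 * D by ring.
lra.
Qed.

Lemma y_dom j : (j < J)%N -> dom h (y j.+1) /\ psiR (y j.+1) <= psiR (yt j.+1).
Proof.
move=> jJ; have [_ _ _ [_ [_ H]] _] := trS jJ.
move: H; rewrite (hE hprop (yt_dom jJ)) -EFinD => H.
have dy := fin_le_dom H.
by split => //; move: H; rewrite (hE hprop dy) -EFinD lee_fin.
Qed.

Lemma gt_eq j u : dom h u -> gamt g gg h mu s j u = (gtR j u)%:E.
Proof. by move=> du; rewrite /gamt (hE hprop du) vnorm2 -!EFinD. Qed.

Lemma gam_eq j u : (j < J)%N -> gam g gg h mu L s j u = (gamR j u)%:E.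
Proof. by move=> jJ; rewrite /gam gt_eq ?yt_dom // vnorm2 -EFinD. Qed.

Lemma Gam_eq j u : (j <= J)%N -> Gam g gg h mu L s j u = (GR j u)%:E.
Proof.
elim: j => [|j IH] jJ //=.
by rewrite IH ?(ltnW jJ) // gam_eq // -!EFinM -EFinD -EFinM.
Qed.

Lemma GR_step j u : (j < J)%N -> A j.+1 * GR j.+1 u = A j * GR j u + a j * gamR j u.
Proof.
move=> jJ; have [_ _ Ap _ _] := scalS jJ.
by rewrite /=; field; rewrite gt_eqF.
Qed.

Lemma GR_le j u : (j <= J)%N -> dom h u -> A j * GR j u <= A j * psiR u.
Proof.
move=> + du; elim: j => [|j IH] jJ.
  by have [-> _ _ _] := tr0; rewrite !mul0r.
rewrite GR_step //.
have [ap _ _ _ _] := scalS jJ.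
have [[_ _ hA] _ _ _ _] := trS jJ.
have := IH (ltnW jJ).
have : a j * gamR j u <= a j * psiR u.
  rewrite ler_pM2l //; apply: le_trans (gam_le_gt jJ du) _; exact: gt_le_psi.
rewrite hA; lra.
Qed.

Definition M j := A j * GR j (x j) + 1 / 2 * dot (x j - x0) (x j - x0).

Lemma xvec j : (j < J)%N ->
  (1 + mu * A j + a j * mu) *: x j.+1
  = (1 + mu * A j) *: x j + (a j * mu) *: yt j.+1 - (a j * L) *: (xt j - yt j.+1).
Proof.
have L0' := L0; have mu0' := mu0.
move=> jJ.
have [[_ _ hA] hxt _ _ hx] := trS jJ.
have [ap e Ap tp Lt] := scalS jJ.
have [A0 _] := scal (ltnW jJ).
have key : a j ^+ 2 * L / (A j + a j) = 1 + mu * A j.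
  by rewrite -Lt e hA; field; rewrite -hA gt_eqF.
have Apos : A j + a j != 0 by rewrite -hA gt_eqF.
have Bpos : (A j + a j) * mu + 1 != 0 by apply: lt0r_neq0; have := mulr_ge0 (ltW Ap) mu0; rewrite hA; lra.
apply/rowP => i; rewrite hx hxt hA !mxE.
set X := x j 0 i; set Y := y j 0 i; set T := yt j.+1 0 i.
have E : (1 + mu * A j) * X + a j * mu * T -
   a j * L * (A j / (A j + a j) * Y + a j / (A j + a j) * X - T)
   - (1 + mu * A j + a j * mu) * (1 / ((A j + a j) * mu + 1) *
     ((L + mu) * a j * T - A j * a j * L / (A j + a j) * Y))
   = X * ((1 + mu * A j) - a j ^+ 2 * L / (A j + a j)).
  by field; apply/andP; split.
move: E; rewrite key subrr mulr0 => /eqP; rewrite subr_eq0 => /eqP <-.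
by [].
Qed.

Lemma GR_quad j u : (j <= J)%N ->
  A j * GR j u + 1 / 2 * dot (u - x0) (u - x0)
  = M j + (1 + mu * A j) / 2 * dot (u - x j) (u - x j).
Proof.
elim: j u => [|j IH] u jJ.
  rewrite /M /=; have [-> _ _ ->] := tr0; rewrite subrr dot0l; ring.
have [[_ _ hA] _ _ _ _] := trS jJ.
have expand : forall w, A j.+1 * GR j.+1 w + 1 / 2 * dot (w - x0) (w - x0)
   = M j + a j * gtR j (yt j.+1)
     + ((1 + mu * A j) / 2 * dot (w - x j) (w - x j)
        + (a j * mu) / 2 * dot (w - yt j.+1) (w - yt j.+1)
        + dot ((a j * L) *: (xt j - yt j.+1)) (w - yt j.+1)).
  move=> w; rewrite GR_step // /gamR dotZl.
  have := IH w (ltnW jJ); lra.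
rewrite /M expand expand.
rewrite (quad_shift u (xvec jJ)).
set Q := _ + _ + dot _ (x j.+1 - yt j.+1).
rewrite hA.
have -> : 1 + mu * A j + a j * mu = 1 + mu * (A j + a j) by ring.
ring.
Qed.


Lemma M0 : M 0 = 0.
Proof. by rewrite /M /=; have [-> _ _ ->] := tr0; rewrite subrr dot0l; ring. Qed.

Lemma main_all j : (j <= J)%N -> A j * psiR (y j) <= M j.
Proof.
have L0' := L0; have mu0' := mu0.
elim: j => [|j IH] jJ.
  by rewrite M0; have [-> _ _ _] := tr0; rewrite mul0r.
have [A0 _] := scal (ltnW jJ).
have P : A j * gamR j (y j) <= M j.
  move: IH jJ A0; case: j => [|j] IH jJ A0.
    by rewrite M0; have [-> _ _ _] := tr0; rewrite mul0r.
  have [dy _] := y_dom (ltnW jJ).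
  apply: le_trans (IH (ltnW jJ)).
  apply: ler_wpM2l => //; apply: le_trans (gt_le_psi _ dy); exact: gam_le_gt.
have [[_ _ hA] hxt _ _ _] := trS jJ.
have [ap ea Ap tp Lt] := scalS jJ.
have [dy1 py1] := y_dom jJ.
have F1 : M j.+1 = M j + (1 + mu * A j) / 2 * dot (x j.+1 - x j) (x j.+1 - x j)
   + a j * gamR j (x j.+1).
  have := GR_quad (x j.+1) (ltnW jJ).
  rewrite /M GR_step //; lra.
rewrite F1.
move: P; rewrite /gamR.
set K := gtR j (yt j.+1).
set e := xt j - yt j.+1.
set D1 := x j.+1 - x j.
set Xx := dot e (x j.+1 - yt j.+1).
set Xy := dot e (y j - yt j.+1).
set Zx := dot (x j.+1 - yt j.+1) (x j.+1 - yt j.+1).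
set Zy := dot (y j - yt j.+1) (y j - yt j.+1).
move=> P.
have F3 : A j * Xy + a j * Xx = A j.+1 * dot e e + a j * dot e D1.
  rewrite /Xx /Xy !dot_lin2; congr (dot e _).
  apply/rowP => i; rewrite /e /D1 hxt hA !mxE; field.
  by rewrite -hA gt_eqF.
have F4 : 0 <= L * A j.+1 / 2 * dot e e + L * a j * dot e D1 + (1 + mu * A j) / 2 * dot D1 D1.
  have S0 := dot_ge0 (A j.+1 *: e + a j *: D1).
  rewrite dot_comb2 in S0.
  have cA : (1 + mu * A j) * A j.+1 = L * a j ^+ 2 by rewrite ea -Lt; ring.
  have : A j.+1 * (L * A j.+1 / 2 * dot e e + L * a j * dot e D1 + (1 + mu * A j) / 2 * dot D1 D1)
     = L / 2 * (A j.+1 ^+ 2 * dot e e + 2 * A j.+1 * a j * dot e D1 + a j ^+ 2 * dot D1 D1).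
    have cA' : 1 + mu * A j = L * a j ^+ 2 / A j.+1 by rewrite -cA; field; rewrite gt_eqF.
    by rewrite cA'; field; rewrite gt_eqF.
  move=> E.
  have : 0 <= A j.+1 * (L * A j.+1 / 2 * dot e e + L * a j * dot e D1 + (1 + mu * A j) / 2 * dot D1 D1).
    rewrite E; apply: mulr_ge0 => //; lra.
  by rewrite pmulr_rge0.
have F5 : psiR (y j.+1) <= K + L / 2 * dot e e.
  apply: le_trans py1 _; apply: le_trans (psi_yt j) _.
  have -> : yt j.+1 - xt j = - e by rewrite /e opprB.
  by rewrite dotNl dotNr opprK.
have F6 : A j.+1 * psiR (y j.+1) <= A j.+1 * (K + L / 2 * dot e e) by rewrite ler_pM2l.
have Zx0 : 0 <= a j * (mu / 2 * Zx) by apply: mulr_ge0; [lra| apply: mulr_ge0; [lra|exact: dot_ge0]].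
have Zy0 : 0 <= A j * (mu / 2 * Zy) by apply: mulr_ge0; [lra| apply: mulr_ge0; [lra|exact: dot_ge0]].
have F3' : L * (A j * Xy) + L * (a j * Xx) = L * (A j.+1 * dot e e) + L * (a j * dot e D1).
  by rewrite -!mulrDr F3.
move: F6; rewrite hA => F6. rewrite hA in F3' F4.
nra.
Qed.

Lemma acg_summary j : (1 <= j)%N -> (j <= J)%N ->
  [/\ dom h (y j), (j%:R) ^+ 2 / (4 * L) <= A j, 0 < A j &
   exists G : vec -> R,
   [/\ (forall u, Gam g gg h mu L s j u = (G u)%:E),
       (forall u, dom h u -> G u <= g u + hr h u),
       (forall u, A j * G u + 1 / 2 * dot (u - x0) (u - x0)
          = A j * G (x j) + 1 / 2 * dot (x j - x0) (x j - x0)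
            + (1 + mu * A j) / 2 * dot (u - x j) (u - x j)) &
       A j * (g (y j) + hr h (y j)) <= A j * G (x j) + 1 / 2 * dot (x j - x0) (x j - x0)]].
Proof.
have _ := (L0, mu0, hlow, hup, hprop, hconv, tr).
case: j => [//|j] _ jJ.
have [dy _] := y_dom jJ.
have [_ _ Ap _ _] := scalS jJ.
split => //; first exact: A_growth.
exists (GR j.+1); split.
- by move=> u; exact: Gam_eq.
- move=> u du; have := GR_le jJ du; rewrite ler_pM2l //.
- by move=> u; rewrite GR_quad.
- exact: main_all.
Qed.
End ACG.

Section Stage.
Variables (R : realType) (n : nat).
Local Notation vec := 'rV[R]_n.
Variables (f : vec -> R) (gf : vec -> vec) (L : R) (h : vec -> \bar R) (lam : R) (zt : vec)
  (s : acg_seq R n) (J : nat).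
Hypotheses (L0 : 0 < L) (fconv : rconvex f) (fsm : L_smooth f gf L)
  (hprop : eproper h) (hconv : econvex h) (lam0 : 0 < lam)
  (tr : acg_trace (stage_g f lam zt) (stage_gg gf lam zt) h (1 / lam) L zt s J).

Lemma stage_hlow x u :
  lin (stage_g f lam zt) (stage_gg gf lam zt) x u + (1 / lam) / 2 * dot (u - x) (u - x)
  <= stage_g f lam zt u.
Proof.
have lam0' := lam0.
rewrite /lin /stage_g /stage_gg !vnorm2 (dotDl (gf x)) dotZl.
have gi := grad_ineq fconv fsm x u.
rewrite (three_pt u x zt).
have : 1 / lam * dot (x - zt) (u - x) = 1 / (2 * lam) * (2 * dot (x - zt) (u - x)).
  by field; rewrite gt_eqF.
have : 1 / lam / 2 * dot (u - x) (u - x) = 1 / (2 * lam) * dot (u - x) (u - x).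
  by field; rewrite gt_eqF.
lra.
Qed.

Lemma stage_hup x u :
  stage_g f lam zt u <= lin (stage_g f lam zt) (stage_gg gf lam zt) x u
     + (L + 1 / lam) / 2 * dot (u - x) (u - x).
Proof.
have lam0' := lam0.
rewrite /lin /stage_g /stage_gg !vnorm2 (dotDl (gf x)) dotZl.
have gi := descent L0 fconv fsm x u.
rewrite (three_pt u x zt).
have : 1 / lam * dot (x - zt) (u - x) = 1 / (2 * lam) * (2 * dot (x - zt) (u - x)).
  by field; rewrite gt_eqF.
have : (L + 1 / lam) / 2 * dot (u - x) (u - x) = L / 2 * dot (u - x) (u - x) + 1 / (2 * lam) * dot (u - x) (u - x).
  by field; rewrite gt_eqF.
lra.
Qed.

Lemma stage_crit j : (1 <= j)%N -> (j <= J)%N -> 6 * lam <= sA s j ->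
  crit_at f gf h L lam zt s j.
Proof.
have lam0' := lam0; have L0' := L0.
move=> j1 jJ A6.
have S := acg_summary L0 (ltW (divr_gt0 ltr01 lam0)) stage_hlow stage_hup hprop hconv tr.
have [dy Agr Ap [G [HG Gle Gq Gm]]] := S j j1 jJ.
set A := sA s j in A6 Agr Ap Gq Gm *.
set x := sx s j in Gq Gm *.
set y := sy s j in dy Gm *.
set v := vhat lam zt s j.
have ve : v = (1 / A + 1 / lam) *: (zt - x) by apply/rowP => i; rewrite /v /vhat !mxE; ring.
have aff : forall u, G u - 1 / (2 * lam) * dot (u - zt) (u - zt)
    = G x - 1 / (2 * lam) * dot (x - zt) (x - zt) + dot v (u - x).
  move=> u.
  have q := Gq u.
  rewrite ve dotZl.
  have -> : dot (zt - x) (u - x) = - dot (x - zt) (u - x) by rewrite -dotNl opprB.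
  rewrite (three_pt u x zt) in q *.
  have E : A * (G u - G x) = - dot (x - zt) (u - x) - 1/2 * dot (u - x) (u - x)
           + (1 + 1 / lam * A) / 2 * dot (u - x) (u - x) by lra.
  have -> : G u = G x + (A * (G u - G x)) / A by field; rewrite gt_eqF.
  rewrite E; field; rewrite !gt_eqF //.
set etaR := f y + hr h y - (G x - 1 / (2 * lam) * dot (x - zt) (x - zt)) - dot v (y - x).
have etaE : eps_j f gf h L lam zt s j = etaR%:E.
  rewrite /eps_j /phi_of HG (hE hprop dy) vnorm2 -/x -/y -/v.
  by rewrite /etaR !EFinB !EFinD.
have etaG : etaR = stage_g f lam zt y + hr h y - G y.
  rewrite /etaR /stage_g vnorm2 -/y.
  have := aff y; lra.
have eta0 : 0 <= etaR by rewrite etaG; have := Gle y dy; lra.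
rewrite /crit_at /restart_crit -/v -/y etaE; split.
  split; first by rewrite lee_fin.
  move=> u; have [du|ndu] := boolP (dom h u); last first.
    rewrite /phi_of; move: ndu; rewrite /dom ltey negbK => /eqP ->.
    by rewrite addey // leey.
  rewrite /phi_of (hE hprop dy) (hE hprop du) -!EFinD lee_fin.
  have := aff u; have := Gle u du; rewrite /stage_g vnorm2.
  have -> : dot v (u - x) = dot v (y - x) + dot v (u - y).
    by rewrite -dotDr; congr (dot v _); apply/rowP => i; rewrite !mxE; ring.
  rewrite /etaR; lra.
rewrite -EFinM -EFinD lee_fin !vnorm2.
set r := lam / A.
have r0 : 0 < r by rewrite divr_gt0.
have r6 : r <= 1 / 6 by rewrite /r ler_pdivrMr //; lra.
set p := x - zt. set w := y - x.
have e1 : lam *: v + y - zt = 1 *: w + (- r) *: p.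
  by rewrite ve; apply/rowP => i; rewrite !mxE /r /w /p; field; rewrite !gt_eqF.
have e2 : zt - y = (-1) *: p + (-1) *: w by apply/rowP => i; rewrite !mxE /w /p; ring.
rewrite e1 e2 !dot_comb2.
have e3 : y - zt = 1 *: p + 1 *: w by apply/rowP => i; rewrite !mxE /w /p; ring.
have q := Gq y. rewrite e3 dot_comb2 -/p -/w in q.
have Aeta : A * etaR <= 1 / 2 * (dot p p + 2 * dot p w + dot w w) - (1 + 1 / lam * A) / 2 * dot w w.
  rewrite etaG /stage_g vnorm2 e3 dot_comb2.
  move: Gm; rewrite /stage_g vnorm2 e3 dot_comb2 -/p.
  move=> Gm'; rewrite mulrBr; lra.
rewrite (dotC w p).
set P := dot p p in Aeta *. set X := dot p w in Aeta *. set W := dot w w in Aeta *.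
have -> : (1 ^+ 2 * W + 2 * 1 * - r * X + (- r) ^+ 2 * P = W - 2 * r * X + r ^+ 2 * P)%R by ring.
have -> : (-1) ^+ 2 * P + 2 * -1 * -1 * X + (-1) ^+ 2 * W = P + 2 * X + W by ring.
have W0 : 0 <= W := dot_ge0 w. have P0 : 0 <= P := dot_ge0 p.
have rA : r * A = lam by rewrite /r; field; rewrite gt_eqF.
have rl : r * (1 + 1 / lam * A) = r + 1 by rewrite /r; field; rewrite !gt_eqF.
have h1 : 2 * lam * etaR <= r * (P + 2 * X + W) - (r + 1) * W.
  have : 2 * r * (A * etaR) <= 2 * r * (1 / 2 * (P + 2 * X + W) - (1 + 1 / lam * A) / 2 * W).
    by rewrite ler_pM2l //; lra.
  have -> : (2 * r * (A * etaR) = 2 * lam * etaR)%R by rewrite -rA; ring.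
  move=> H; have rlW : r * (1 + 1 / lam * A) * W = (r + 1) * W by rewrite rl.
  lra.
have h2 : W <= P + 2 * X + W.
  have : A * 0 <= A * etaR by rewrite ler_pM2l.
  have : 0 <= 1 / lam * A * W by rewrite mulr_ge0 // mulr_ge0 // ?divr_ge0 //; lra.
  lra.
have h3 : P <= 4 * (P + 2 * X + W).
  have := dot_ge0 (1 *: p + 2 *: w); rewrite dot_comb2 -/P -/X -/W expr1n !mul1r.
  lra.
have h4 : r * P <= 1 / 6 * P by rewrite ler_wpM2r.
have h5 : r ^+ 2 * P <= 1 / 36 * P.
  apply: ler_wpM2r => //; have : r * r <= 1 / 6 * (1 / 6) by apply: ler_pM; lra.
  rewrite expr2; lra.
have -> : (2 * r * X = 2 * (r * X))%R by ring.
have : r * (P + 2 * X + W) = r * P + 2 * (r * X) + r * W by ring.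
have : (r + 1) * W = r * W + W by ring.
lra.
Qed.



Lemma stage_count : (forall j, (1 <= j)%N -> (j < J)%N -> ~ crit_at f gf h L lam zt s j) ->
  1 <= lam * L -> (J%:R) ^+ 2 <= 36 * (lam * L) :> R.
Proof.
have lam0' := lam0; have L0' := L0.
move=> Hnc lL.
have [J1|J2] := leqP J 1.
  have : J%:R <= 1 :> R by rewrite (ler_nat R J 1).
  have : 0 <= J%:R :> R by [].
  move=> a b; rewrite expr2; nra.
have S := acg_summary L0 (ltW (divr_gt0 ltr01 lam0)) stage_hlow stage_hup hprop hconv tr.
have eJ : J = J.-1.+1 by rewrite prednK // (ltn_trans _ J2).
set j := J.-1 in eJ.
have jJ : (j < J)%N by rewrite [X in (_ < X)%N]eJ.
have j1 : (1 <= j)%N by move: J2; rewrite eJ.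
have nA : sA s j < 6 * lam.
  rewrite ltNge; apply/negP => H; exact: (Hnc j j1 jJ (stage_crit j1 (ltnW jJ) H)).
have [_ Agr _ _] := S j j1 (ltnW jJ).
have : j%:R ^+ 2 < 24 * (lam * L) :> R.
  have := le_lt_trans Agr nA; rewrite ltr_pdivrMr; last lra.
  lra.
rewrite eJ natRS.
have : 0 <= j%:R :> R by [].
move=> a b; rewrite !expr2 in b *; nra.
Qed.

End Stage.

Section Outer.
Variables (R : realType) (n : nat).
Local Notation vec := 'rV[R]_n.

Lemma crit_real (f : vec -> R) (h : vec -> \bar R) (lam phis : R) (zt wt u xs : vec) (eta : \bar R) :
  eproper h -> 0 < lam -> phi_of f h xs = phis%:E ->
  restart_crit f h lam zt wt u eta ->
  exists etaR : R, [/\ eta = etaR%:E, 0 <= etaR, dom h wt,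
    (forall y, dom h y -> f wt + hr h wt + dot u (y - wt) - etaR <= f y + hr h y) &
    dot (lam *: u + wt - zt) (lam *: u + wt - zt) + 2 * lam * etaR
      <= 9 / 10 * dot (zt - wt) (zt - wt)].
Proof.
move=> hp lam0 hxs [[eta0 Hsub] Hc].
have etaN : eta != -oo%E by apply: contraTneq eta0 => ->.
have etaF : (eta < +oo)%E.
  rewrite ltey; apply/negP => /eqP einf.
  move: Hc; rewrite einf gt0_muley ?lte_fin; last lra.
  by rewrite addey // leye_eq.
have eE := fin_of etaN etaF.
exists (fine eta).
have dwt : dom h wt.
  have := Hsub xs; rewrite hxs /phi_of /dom ltey => H; apply/negP => /eqP hinf.
  by move: H; rewrite hinf eE addey // addye // addye // leye_eq.
split => //.
- by move: eta0; rewrite eE lee_fin.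
- move=> y dy; have := Hsub y.
  by rewrite /phi_of eE (hE hp dwt) (hE hp dy) -!EFinD lee_fin.
- by move: Hc; rewrite eE -EFinM -EFinD lee_fin !vnorm2.
Qed.


Lemma outer (f : vec -> R) (h : vec -> \bar R) (lam phis : R) (xs w0 : vec)
  (z w zt wt u : nat -> vec) (b B : nat -> R) (eta : nat -> \bar R) (K : nat) :
  eproper h -> 0 < lam -> phi_of f h xs = phis%:E -> dom h w0 ->
  z 0 = w0 -> w 0 = w0 -> B 0 = 0 ->
  (forall k, (1 <= k)%N -> (k <= K)%N ->
     [/\ b k = (lam + Num.sqrt (lam ^+ 2 + 4 * lam * B k.-1)) / 2,
         B k = B k.-1 + b k &
         zt k = (B k.-1 / B k) *: w k.-1 + (b k / B k) *: z k.-1]) ->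
  (forall k, (1 <= k)%N -> (k <= K)%N ->
     [/\ restart_crit f h lam (zt k) (wt k) (u k) (eta k),
         z k = z k.-1 - b k *: u k,
         (phi_of f h (w k) <= phi_of f h (w k.-1))%E &
         (phi_of f h (w k) <= phi_of f h (wt k))%E]) ->
  forall k, (k <= K)%N ->
  [/\ dom h (w k), (k%:R) ^+ 2 * lam / 4 <= B k &
      B k * (f (w k) + hr h (w k) - phis) + 1 / 2 * dot (z k - xs) (z k - xs)
        <= 1 / 2 * dot (w0 - xs) (w0 - xs)].
Proof.
move=> hp lam0 hxs dw0 z0 w0e B0 Hrec Hstg.
have dxs : dom h xs by apply: (@fin_le_dom _ _ h (f xs) phis); rewrite -/(phi_of f h xs) hxs.
have pxs : f xs + hr h xs = phis by move: hxs; rewrite /phi_of (hE hp dxs) -EFinD => /eqP; rewrite eqe => /eqP.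
elim=> [|k IH] kK.
  rewrite w0e z0 B0; split => //; first by rewrite expr0n /= !mul0r.
  by rewrite mul0r add0r.
have [dwk Bkg Phik] := IH (ltnW kK).
have [hb hB hzt] := Hrec k.+1 isT kK.
have [hc hz hw1 hw2] := Hstg k.+1 isT kK.
rewrite /= in hb hB hzt hz hw1 hw2.
have Bk0 : 0 <= B k by apply: le_trans Bkg; rewrite mulr_ge0 // ?divr_ge0 ?mulr_ge0 ?sqr_ge0 //; lra.
have [bp bsq] := root_sq lam0 Bk0; rewrite -hb in bp bsq.
have B1p : 0 < B k.+1 by rewrite hB; lra.
have [etaR [ee eta0 dwt Hsub Hc]] := crit_real hp lam0 hxs hc.
have dwk1 : dom h (w k.+1).
  apply: (@fin_le_dom _ _ h (f (w k.+1)) (f (w k) + hr h (w k))).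
  by move: hw1; rewrite /phi_of (hE hp dwk) -EFinD.
have P1le : f (w k.+1) + hr h (w k.+1) <= f (wt k.+1) + hr h (wt k.+1).
  by move: hw2; rewrite /phi_of (hE hp dwk1) (hE hp dwt) -!EFinD lee_fin.
split => //.
  have c0 : 0 <= k%:R * lam / 2 by rewrite divr_ge0 ?mulr_ge0 //; lra.
  have hcc : (k%:R * lam / 2) ^+ 2 <= lam * B k.
    have : (k%:R * lam / 2) ^+ 2 = lam * (k%:R ^+ 2 * lam / 4) by field.
    move=> ->; rewrite ler_pM2l //.
  have ee2 : b k.+1 ^+ 2 = lam * (B k + b k.+1) by [].
  have gb := root_growth lam0 bp ee2 c0 hcc.
  rewrite hB (natRS R k).
  have -> : ((k%:R + 1) ^+ 2 * lam / 4 = k%:R ^+ 2 * lam / 4 + (2 * k%:R + 1) * lam / 4)%R by field.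
  have : (2 * k%:R + 1) * lam / 4 <= lam / 2 + k%:R * lam / 2.
    have : 0 <= lam / 4 by rewrite divr_ge0 //; lra.
    have -> : ((2 * k%:R + 1) * lam / 4 = lam / 2 + k%:R * lam / 2 - lam / 4)%R by field.
    lra.
  lra.
apply: le_trans Phik.
have S1 := Hsub xs dxs. have S2 := Hsub (w k) dwk.
rewrite pxs in S1.
set PW := f (wt k.+1) + hr h (wt k.+1) in S1 S2 P1le *.
set Pw := f (w k) + hr h (w k) in S2 *.
set P1 := f (w k.+1) + hr h (w k.+1) in P1le *.
set uk := u k.+1 in Hc S1 S2 hz *.
set Y1 := dot uk (xs - wt k.+1) in S1.
set Y2 := dot uk (w k - wt k.+1) in S2.
set Uw := dot uk (wt k.+1 - zt k.+1).
set U := dot uk uk.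
set V := dot (wt k.+1 - zt k.+1) (wt k.+1 - zt k.+1).
set Z := dot (z k - xs) (z k - xs).
set Zu := dot (z k - xs) uk.
have I1 : b k.+1 * Y1 + B k * Y2 = - B k.+1 * Uw - b k.+1 * Zu.
  have -> : (- B k.+1 * Uw - b k.+1 * Zu = (- B k.+1) * Uw + (- b k.+1) * dot uk (z k - xs))%R
    by rewrite /Zu dotC; ring.
  rewrite /Y1 /Y2 /Uw dot_lin2 dot_lin2.
  congr (dot uk _); apply/rowP => i; rewrite hzt !mxE hB; field.
  by rewrite -hB gt_eqF.
have I2 : dot (z k.+1 - xs) (z k.+1 - xs) = Z - 2 * b k.+1 * Zu + b k.+1 ^+ 2 * U.
  have -> : z k.+1 - xs = 1 *: (z k - xs) + (- b k.+1) *: uk by rewrite hz; apply/rowP => i; rewrite !mxE; ring.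
  rewrite dot_comb2 -/Z -/Zu -/U; ring.
have I3 : dot (lam *: uk + wt k.+1 - zt k.+1) (lam *: uk + wt k.+1 - zt k.+1) = lam ^+ 2 * U + 2 * lam * Uw + V.
  have -> : lam *: uk + wt k.+1 - zt k.+1 = lam *: uk + 1 *: (wt k.+1 - zt k.+1)
    by apply/rowP => i; rewrite !mxE; ring.
  rewrite dot_comb2 -/U -/Uw -/V; ring.
have I4 : dot (zt k.+1 - wt k.+1) (zt k.+1 - wt k.+1) = V.
  have -> : zt k.+1 - wt k.+1 = - (wt k.+1 - zt k.+1) by rewrite opprB.
  by rewrite dotNl dotNr opprK.
rewrite I2; rewrite I3 I4 in Hc.
have V0 : 0 <= V := dot_ge0 _.
have h4 : Uw + etaR + lam / 2 * U <= 0.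
  have : 2 * lam * (Uw + etaR + lam / 2 * U) <= 0.
    have -> : (2 * lam * (Uw + etaR + lam / 2 * U) = lam ^+ 2 * U + 2 * lam * Uw + 2 * lam * etaR)%R by field.
    lra.
  by rewrite pmulr_rle0 //; lra.
have h1 : b k.+1 * (PW + Y1 - etaR) <= b k.+1 * phis by rewrite ler_pM2l.
have h2 : B k * (PW + Y2 - etaR) <= B k * Pw by apply: ler_wpM2l.
have h3 : B k.+1 * P1 <= B k.+1 * PW by rewrite ler_pM2l.
have h5 : B k.+1 * (Uw + etaR + lam / 2 * U) <= 0 by rewrite pmulr_rle0.
have h6 : b k.+1 ^+ 2 * U = lam * B k.+1 * U by rewrite bsq hB.
rewrite hB in h3 h5 h6 I1 *.
nra.
Qed.

End Outer.

Lemma sq_le_nonneg (R : realType) (c r : R) : 0 <= r -> c ^+ 2 <= r ^+ 2 -> c <= r.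
Proof. move=> r0 h; rewrite leNgt; apply/negP => hc; rewrite !expr2 in h; nra. Qed.

Unset Implicit Arguments.

Theorem theorem2p9 :
  exists C : nat,
  forall (R : realType) (n : nat) (f : 'rV[R]_n -> R) (gf : 'rV[R]_n -> 'rV[R]_n)
    (L : R) (h : 'rV[R]_n -> \bar R) (phis : R) (w0 : 'rV[R]_n) (epsb lam : R)
    (z w zt wt u : nat -> 'rV[R]_n) (b B : nat -> R) (eta : nat -> \bar R)
    (m : nat -> nat) (s : nat -> acg_seq R n) (K J : nat),
    0 < L ->
    rconvex f -> L_smooth f gf L ->
    eproper h -> eclosed h -> econvex h ->
    (exists xs, phi_of f h xs = phis%:E) ->
    (forall x, (phis%:E <= phi_of f h x)%E) ->
    edom h w0 ->
    0 < epsb ->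
    1 / L <= lam ->
    lam <= dist_to (minimizers (phi_of f h)) w0 ^+ 2 / epsb ->
    restart_prefix f gf h L lam w0 z w zt wt u b B eta m s K J ->
    (forall k, (k <= K)%N -> ((phis + epsb)%:E < phi_of f h (w k))%E) ->
    ((\sum_(1 <= k < K.+1) m k + J)%N%:R : R)
      <= C%:R * Num.sqrt L * dist_to (minimizers (phi_of f h)) w0 / Num.sqrt epsb.
Proof.
exists 15%N.
move=> R n f gf L h phis w0 epsb lam z w zt wt u b B eta m s K J
  L0 fconv fsm hprop _ hconv [xs hxs] hmin dw0 eps0 lamL lamd
  [[z0 w0e B0] Hrec Hstg Hpart] Hgap.
have lam0 : 0 < lam by apply: lt_le_trans lamL; rewrite divr_gt0.
have lL : 1 <= lam * L by move: lamL; rewrite ler_pdivrMr // mulrC.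
set d0 := dist_to (minimizers (phi_of f h)) w0 in lamd *.
have Hrec' : forall k, (1 <= k)%N -> (k <= K)%N ->
   [/\ b k = (lam + Num.sqrt (lam ^+ 2 + 4 * lam * B k.-1)) / 2,
       B k = B k.-1 + b k &
       zt k = (B k.-1 / B k) *: w k.-1 + (b k / B k) *: z k.-1].
  by move=> k k1 kK; apply: Hrec => //; exact: ltnW.
have Hstg' : forall k, (1 <= k)%N -> (k <= K)%N ->
   [/\ restart_crit f h lam (zt k) (wt k) (u k) (eta k),
       z k = z k.-1 - b k *: u k,
       (phi_of f h (w k) <= phi_of f h (w k.-1))%E &
       (phi_of f h (w k) <= phi_of f h (wt k))%E].
  move=> k k1 kK; have [[_ _ hc _ [-> -> ->]] hz [_ [h1 h2]]] := Hstg k k1 kK.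
  by split.
have outK : forall y, minimizers (phi_of f h) y ->
    [/\ dom h (w K), (K%:R) ^+ 2 * lam / 4 <= B K &
      B K * (f (w K) + hr h (w K) - phis) + 1 / 2 * dot (z K - y) (z K - y)
        <= 1 / 2 * dot (w0 - y) (w0 - y)].
  move=> y my.
  have hy : phi_of f h y = phis%:E.
    apply/eqP; rewrite eq_le hmin andbT; rewrite -hxs; exact: my.
  exact: (outer hprop lam0 hy dw0 z0 w0e B0 Hrec' Hstg' (leqnn K)).
have [dwK BKg _] := outK xs (fun y => ltac:(rewrite hxs; exact: hmin)).
have gapK : phis + epsb < f (w K) + hr h (w K).
  by have := Hgap K (leqnn K); rewrite /phi_of (hE hprop dwK) -EFinD lte_fin.
have BK0 : 0 <= B K by apply: le_trans BKg; rewrite mulr_ge0 ?divr_ge0 ?mulr_ge0 ?sqr_ge0 //; lra.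
have key : forall y, minimizers (phi_of f h) y -> 2 * (B K * epsb) <= vnorm (w0 - y) ^+ 2.
  move=> y my; have [_ _ H] := outK y my.
  have := dot_ge0 (z K - y).
  have : B K * epsb <= B K * (f (w K) + hr h (w K) - phis) by apply: ler_wpM2l => //; lra.
  rewrite vnorm2; lra.
set c := Num.sqrt (2 * (B K * epsb)).
have c0 : 0 <= c := sqrtr_ge0 _.
have c2 : c ^+ 2 = 2 * (B K * epsb) by rewrite sqr_sqrtr // mulr_ge0 // mulr_ge0 //; lra.
have Sne : ((fun r : R => exists2 y, minimizers (phi_of f h) y & r = vnorm (w0 - y)) !=set0)%classic.
  exists (vnorm (w0 - xs)); exists xs => //.
  by move=> x; rewrite hxs; exact: hmin.
have cd : c <= d0.
  apply: lb_le_inf => // r [y my ->].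
  apply: sq_le_nonneg; first exact: vnorm_ge0.
  by rewrite c2; exact: key.
have d00 : 0 <= d0 by apply: lb_le_inf => // r [y my ->]; exact: vnorm_ge0.
have Kb : (K%:R) ^+ 2 * lam * epsb <= 2 * d0 ^+ 2.
  have : c ^+ 2 <= d0 ^+ 2 by rewrite !expr2; nra.
  rewrite c2 => H.
  have : K%:R ^+ 2 * lam / 4 * epsb <= B K * epsb by rewrite ler_pM2r.
  have -> : (K%:R ^+ 2 * lam / 4 * epsb = (K%:R ^+ 2 * lam * epsb) / 4)%R by field.
  lra.
set sl := Num.sqrt lam. set sL := Num.sqrt L. set se := Num.sqrt epsb.
have sl0 : 0 < sl by rewrite sqrtr_gt0.
have sL0 : 0 < sL by rewrite sqrtr_gt0.
have se0 : 0 < se by rewrite sqrtr_gt0.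
have sl2 : sl ^+ 2 = lam by rewrite sqr_sqrtr // ltW.
have sL2 : sL ^+ 2 = L by rewrite sqr_sqrtr // ltW.
have se2 : se ^+ 2 = epsb by rewrite sqr_sqrtr // ltW.
set T := 6 * sl * sL.
have T0 : 0 <= T by rewrite /T !mulr_ge0 //; lra.
have cnt : forall N : nat, (N%:R) ^+ 2 <= 36 * (lam * L) :> R -> N%:R <= T.
  move=> N HN; apply: sq_le_nonneg => //.
  by rewrite /T !exprMn sl2 sL2; lra.
have mk : forall k, (1 <= k < K.+1)%N -> (m k)%:R <= T.
  move=> k /andP [k1 kK]; rewrite ltnS in kK.
  have [[tr _ _ nc _] _ _] := Hstg k k1 kK.
  exact: cnt _ (stage_count L0 fconv fsm hprop hconv lam0 tr nc lL).
have Jk : J%:R <= T.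
  have [tr nc] := Hpart.
  exact: cnt _ (stage_count L0 fconv fsm hprop hconv lam0 tr nc lL).
have sumle : ((\sum_(1 <= k < K.+1) m k + J)%N%:R : R) <= K%:R * T + T.
  rewrite natrD natr_sum.
  have := ler_sum_nat mk; rewrite sumr_const_nat subn1 /= -mulr_natl.
  lra.
apply: le_trans sumle _.
have hK : K%:R * sl * se <= 3 / 2 * d0.
  apply: sq_le_nonneg; first lra.
  have -> : ((3 / 2 * d0) ^+ 2 = 9 / 4 * d0 ^+ 2)%R by field.
  rewrite !exprMn sl2 se2. have := sqr_ge0 d0. lra.
have h1 : sl * se <= d0.
  apply: sq_le_nonneg => //; rewrite exprMn sl2 se2.
  by move: lamd; rewrite ler_pdivlMr.
have : (K%:R * T + T) * se <= 15 * sL * d0.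
  have -> : ((K%:R * T + T) * se = 6 * sL * (K%:R * sl * se + sl * se))%R by rewrite /T; ring.
  have : K%:R * sl * se + sl * se <= 5 / 2 * d0 by lra.
  have : 0 <= 6 * sL by lra.
  nra.
rewrite -ler_pdivlMr //.
Qed.
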